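(* Let $G$ be a connected graph and let $r\le r'$ be natural numbers. Let $q_{r,r'}:G_r\to G_{r'}$ be a covering with $p_r=p_{r'}\circ q_{r,r'}$, and let $p_{r,r'}:(G_{r'})_r\to G_{r'}$ be the $r$-local covering of $G_{r'}$. Then $p_{r,r'}$ and $q_{r,r'}$ are equivalent coverings of $G_{r'}$, and $p_r$ and $p_{r'}\circ p_{r,r'}$ are equivalent coverings of $G$. In particular, $(G_{r'})_r$ and $G_r$ are isomorphic graphs.
   Context: Graphs may have loops and parallel edges and are viewed as 1-complexes; covering spaces are connected. A cycle may be a loop or a pair of parallel edges; a closed walk once around a cycle $O$ traverses every edge of $O$ exactly once. For a connected graph $X$, a vertex $x_0$ and $s\in\mathbb{N}$, $\pi_1^s(X,x_0)$ is the subgroup of $\pi_1(X,x_0)$ generated by the classes of closed walks $W_0QW_0^-$, $W_0$ a walk from $x_0$ to a vertex $y$, $Q$ a closed walk at $y$ once around a cycle of length at most $s$, $W_0^-$ the reverse of $W_0$. The $s$-local covering $p_s:X_s\to X$ is the connected normal covering with characteristic subgroup $\pi_1^s(X,x_0)$. (A covering $q_{r,r'}$ as in the claim exists, and is unique up to equivalence.) Two coverings $q:X\to Y$, $q':X'\to Y$ are equivalent if there is a homeomorphism $h:X\to X'$ with $q'\circ h=q$. *)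

(* Defs.v *)
(* Graphs as 1-complexes are encoded
   combinatorially by darts (oriented edges) with a fixed-point-free
   reversal involution; this allows loops and parallel edges, and
   arbitrary (possibly infinite) vertex/dart types. *)
From Stdlib Require Import List Relations.
Import ListNotations.
Set Implicit Arguments.

Record graph := Graph {
  V : Type;
  D : Type;
  tail : D -> V;
  drev : D -> D;
  drev_invol : forall d, drev (drev d) = d;
  drev_nofix : forall d, drev d <> d }.

Arguments tail {g} _.
Arguments drev {g} _.

Definition head {G : graph} (d : D G) : V G := tail (drev d).

Fixpoint is_walk {G : graph} (x : V G) (l : list (D G)) : Prop :=
  match l with
  | nil => True
  | d :: l' => tail d = x /\ is_walk (head d) l'
  end.

Fixpoint wend {G : graph} (x : V G) (l : list (D G)) : V G :=
  match l with
  | nil => x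
  | d :: l' => wend (head d) l'
  end.

Definition closed_walk {G : graph} (x : V G) (l : list (D G)) : Prop :=
  is_walk x l /\ wend x l = x.

Definition rev_walk {G : graph} (l : list (D G)) : list (D G) :=
  List.rev (map drev l).

Inductive red1 {G : graph} : list (D G) -> list (D G) -> Prop :=
  | red1_intro : forall l1 l2 d, red1 (l1 ++ d :: drev d :: l2) (l1 ++ l2).

Definition homotopic {G : graph} : list (D G) -> list (D G) -> Prop :=
  clos_refl_sym_trans _ red1.

(* Q is a closed walk at y once around a cycle: nonempty, closed, visiting
   pairwise distinct vertices and traversing pairwise distinct edges
   (a loop for length 1, a pair of parallel edges for length 2). *)
Definition cycle_walk {G : graph} (y : V G) (Q : list (D G)) : Prop :=
  Q <> nil /\ closed_walk y Q /\ NoDup (map tail Q) /\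
  (forall l1 d l2 d' l3, Q = l1 ++ d :: l2 ++ d' :: l3 ->
      d' <> d /\ d' <> drev d).

Definition pi1_gen {G : graph} (s : nat) (x0 : V G) (l : list (D G)) : Prop :=
  exists (W0 Q : list (D G)),
    is_walk x0 W0 /\ cycle_walk (wend x0 W0) Q /\ length Q <= s /\
    l = W0 ++ Q ++ rev_walk W0.

Inductive in_gen {G : graph} (P : list (D G) -> Prop) : list (D G) -> Prop :=
  | gen_nil : in_gen P nil
  | gen_base : forall l, P l -> in_gen P l
  | gen_app : forall l1 l2, in_gen P l1 -> in_gen P l2 -> in_gen P (l1 ++ l2)
  | gen_inv : forall l, in_gen P l -> in_gen P (rev_walk l).

(* The class of the closed walk W at x0 lies in pi_1^s(G, x0). *)
Definition in_pi1s {G : graph} (s : nat) (x0 : V G) (W : list (D G)) : Prop :=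
  exists W', in_gen (pi1_gen s x0) W' /\ homotopic W W'.

Record gmor (X Y : graph) := GMor {
  fv : V X -> V Y;
  fd : D X -> D Y;
  fd_tail : forall d, tail (fd d) = fv (tail d);
  fd_rev : forall d, fd (drev d) = drev (fd d) }.

Arguments fv {X Y} _ _.
Arguments fd {X Y} _ _.

Definition gcomp {X Y Z : graph} (g : gmor Y Z) (f : gmor X Y) : gmor X Z.
Proof.
  refine (@GMor X Z (fun v => fv g (fv f v)) (fun d => fd g (fd f d)) _ _).
  - intro d. rewrite fd_tail, fd_tail. reflexivity.
  - intro d. rewrite fd_rev, fd_rev. reflexivity.
Defined.

Definition connected (G : graph) : Prop :=
  inhabited (V G) /\
  forall x y : V G, exists l, is_walk x l /\ wend x l = y.

Definition is_covering {X Y : graph} (f : gmor X Y) : Prop :=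
  connected X /\
  (forall y : V Y, exists x, fv f x = y) /\
  (forall (x : V X) (e : D Y), tail e = fv f x ->
      exists! d : D X, tail d = x /\ fd f d = e).

(* The characteristic subgroup f_*(pi_1(X, x0)) equals pi_1^s(Y, f x0):
   a closed walk at f x0 lifts to a closed walk at x0 iff its class lies in
   pi_1^s(Y, f x0). *)
Definition char_subgroup_is_pi1s {X Y : graph} (s : nat) (f : gmor X Y)
    (x0 : V X) : Prop :=
  forall W : list (D Y), closed_walk (fv f x0) W ->
    ((exists Wt, closed_walk x0 Wt /\ map (fd f) Wt = W) <-> in_pi1s s (fv f x0) W).

Definition is_local_covering {X Y : graph} (s : nat) (p : gmor X Y) : Prop :=
  is_covering p /\ exists x0 : V X, char_subgroup_is_pi1s s p x0.

Definition is_iso {X Y : graph} (h : gmor X Y) : Prop :=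
  exists hi : gmor Y X,
    (forall v, fv hi (fv h v) = v) /\ (forall v, fv h (fv hi v) = v) /\
    (forall d, fd hi (fd h d) = d) /\ (forall d, fd h (fd hi d) = d).

Definition graph_iso (X Y : graph) : Prop := exists h : gmor X Y, is_iso h.

Definition equiv_cov {X X' Y : graph} (q : gmor X Y) (q' : gmor X' Y) : Prop :=
  exists h : gmor X X', is_iso h /\
    (forall v, fv q' (fv h v) = fv q v) /\ (forall d, fd q' (fd h d) = fd q d).

(* Main.v *)
From Stdlib Require Import List Relations Lia Classical ClassicalEpsilon.
Require Import Defs.
Import ListNotations.

Lemma wend_app {G : graph} (x : V G) l1 l2 : wend x (l1 ++ l2) = wend (wend x l1) l2.
Proof. revert x; induction l1; simpl; auto. Qed.

Lemma is_walk_app {G : graph} (x : V G) l1 l2 :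
  is_walk x (l1 ++ l2) <-> is_walk x l1 /\ is_walk (wend x l1) l2.
Proof. revert x; induction l1 as [|d l1 IH]; intro x; simpl. tauto. rewrite IH. tauto. Qed.

Lemma head_drev {G : graph} (d : D G) : head (drev d) = tail d.
Proof. unfold head; rewrite drev_invol; auto. Qed.

Lemma rev_walk_app {G : graph} (l1 l2 : list (D G)) :
  rev_walk (l1 ++ l2) = rev_walk l2 ++ rev_walk l1.
Proof. unfold rev_walk; rewrite map_app, rev_app_distr; auto. Qed.

Lemma rev_walk_cons {G : graph} (d : D G) l : rev_walk (d :: l) = rev_walk l ++ [drev d].
Proof. reflexivity. Qed.

Lemma rev_walk_invol {G : graph} (l : list (D G)) : rev_walk (rev_walk l) = l.
Proof.
  unfold rev_walk; rewrite map_rev, rev_involutive, map_map.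
  erewrite map_ext; [apply map_id | intro; apply drev_invol].
Qed.

Lemma rev_walk_walk {G : graph} (x : V G) l :
  is_walk x l -> is_walk (wend x l) (rev_walk l) /\ wend (wend x l) (rev_walk l) = x.
Proof.
  revert x; induction l as [|d l IH]; intros x H; simpl in *. auto.
  destruct H as [Ht Hw]. destruct (IH _ Hw) as [H1 H2].
  rewrite rev_walk_cons, is_walk_app, wend_app, H2. simpl.
  rewrite head_drev. unfold head. auto.
Qed.

Lemma head_fd {X Y} (f : gmor X Y) d : head (fd f d) = fv f (head d).
Proof. unfold head; rewrite <- fd_rev, fd_tail; auto. Qed.

Lemma fv_wend {X Y} (f : gmor X Y) x l : fv f (wend x l) = wend (fv f x) (map (fd f) l).
Proof. revert x; induction l; simpl; auto. intro; rewrite IHl, head_fd; auto. Qed.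

Lemma map_walk {X Y} (f : gmor X Y) x l : is_walk x l -> is_walk (fv f x) (map (fd f) l).
Proof.
  revert x; induction l as [|d l IH]; simpl; auto. intros x [H1 H2].
  rewrite fd_tail, H1, head_fd. split; auto.
Qed.

Lemma map_rev_walk {X Y} (f : gmor X Y) l :
  map (fd f) (rev_walk l) = rev_walk (map (fd f) l).
Proof.
  unfold rev_walk; rewrite map_rev, !map_map; f_equal; apply map_ext; intro; apply fd_rev.
Qed.

Lemma hom_ctx {G : graph} (u v a b : list (D G)) :
  homotopic a b -> homotopic (u ++ a ++ v) (u ++ b ++ v).
Proof.
  induction 1.
  - apply rst_step. destruct H.
    replace (u ++ (l1 ++ d :: drev d :: l2) ++ v) with ((u ++ l1) ++ d :: drev d :: (l2 ++ v))
      by (rewrite <- !app_assoc; reflexivity).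
    replace (u ++ (l1 ++ l2) ++ v) with ((u ++ l1) ++ (l2 ++ v))
      by (rewrite <- !app_assoc; reflexivity).
    constructor.
  - apply rst_refl.
  - apply rst_sym; auto.
  - eapply rst_trans; eauto.
Qed.

Lemma hom_refl {G : graph} (a : list (D G)) : homotopic a a.
Proof. apply rst_refl. Qed.
Lemma hom_sym {G : graph} (a b : list (D G)) : homotopic a b -> homotopic b a.
Proof. apply rst_sym. Qed.
Lemma hom_trans {G : graph} (a b c : list (D G)) : homotopic a b -> homotopic b c -> homotopic a c.
Proof. apply rst_trans. Qed.

Lemma hom_app {G : graph} (a a' b b' : list (D G)) :
  homotopic a a' -> homotopic b b' -> homotopic (a ++ b) (a' ++ b').
Proof.
  intros H1 H2. eapply hom_trans.
  - pose proof (hom_ctx [] b _ _ H1). simpl in H. exact H.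
  - pose proof (hom_ctx a' [] _ _ H2). rewrite !app_nil_r in H. exact H.
Qed.

Lemma hom_cancel {G : graph} (l : list (D G)) : homotopic (l ++ rev_walk l) [].
Proof.
  induction l as [|d l IH]. apply hom_refl.
  rewrite rev_walk_cons.
  replace ((d :: l) ++ rev_walk l ++ [drev d]) with ([d] ++ (l ++ rev_walk l) ++ [drev d])
    by (simpl; rewrite app_assoc; reflexivity).
  eapply hom_trans. apply hom_ctx; exact IH.
  simpl. apply rst_step. apply (red1_intro [] [] d).
Qed.

Lemma hom_cancel' {G : graph} (l : list (D G)) : homotopic (rev_walk l ++ l) [].
Proof. pose proof (hom_cancel (rev_walk l)). rewrite rev_walk_invol in H. exact H. Qed.

Lemma hom_map {X Y} (f : gmor X Y) a b : homotopic a b -> homotopic (map (fd f) a) (map (fd f) b).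
Proof.
  induction 1.
  - apply rst_step. destruct H. rewrite !map_app. simpl. rewrite fd_rev. constructor.
  - apply rst_refl.
  - apply rst_sym; auto.
  - eapply rst_trans; eauto.
Qed.

Lemma hom_rev {G : graph} (a b : list (D G)) : homotopic a b -> homotopic (rev_walk a) (rev_walk b).
Proof.
  induction 1.
  - apply rst_step. destruct H. rewrite !rev_walk_app, !rev_walk_cons.
    rewrite drev_invol. rewrite <- !app_assoc. simpl. constructor.
  - apply rst_refl.
  - apply rst_sym; auto.
  - eapply rst_trans; eauto.
Qed.

Definition ULP {X Y} (f : gmor X Y) : Prop :=
  forall x e, tail e = fv f x -> exists! d, tail d = x /\ fd f d = e.

Lemma ulp_eq {X Y} (f : gmor X Y) : ULP f -> forall d1 d2, tail d1 = tail d2 -> fd f d1 = fd f d2 -> d1 = d2.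
Proof.
  intros H d1 d2 Ht He. destruct (H (tail d1) (fd f d1) (fd_tail f d1)) as [d0 [_ Hu]].
  rewrite <- (Hu d1), <- (Hu d2); auto.
Qed.

Lemma lift_ex {X Y} (f : gmor X Y) : ULP f ->
  forall W x, is_walk (fv f x) W -> exists Wt, is_walk x Wt /\ map (fd f) Wt = W.
Proof.
  intros H W; induction W as [|e W IH]; intros x HW. exists []; simpl; auto.
  destruct HW as [Ht HW]. destruct (H x e Ht) as [d [[Hd1 Hd2] _]].
  rewrite <- Hd2, head_fd in HW. destruct (IH _ HW) as [Wt [H1 H2]].
  exists (d :: Wt). simpl. rewrite H2, Hd2. auto.
Qed.

Lemma lift_uniq {X Y} (f : gmor X Y) : ULP f ->
  forall Wt1 Wt2 x, is_walk x Wt1 -> is_walk x Wt2 -> map (fd f) Wt1 = map (fd f) Wt2 -> Wt1 = Wt2.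
Proof.
  intros H Wt1; induction Wt1 as [|d1 l1 IH]; intros [|d2 l2] x H1 H2 Hm; simpl in *;
    try discriminate; auto.
  injection Hm as He Hm. destruct H1 as [Ht1 H1]; destruct H2 as [Ht2 H2].
  assert (d1 = d2) by (apply (ulp_eq f H); congruence). subst d2.
  f_equal; eauto.
Qed.

Definition Sig {X Y} (f : gmor X Y) (e : D Y) (x y : V X) : Prop :=
  (fv f x = tail e /\ exists d, tail d = x /\ fd f d = e /\ head d = y) \/
  (fv f x <> tail e /\ fv f x = head e /\ exists d, head d = x /\ fd f d = e /\ tail d = y) \/
  (fv f x <> tail e /\ fv f x <> head e /\ y = x).

Lemma Sig_ex {X Y} (f : gmor X Y) : ULP f -> forall e x, exists y, Sig f e x y.
Proof.
  intros H e x. destruct (classic (fv f x = tail e)) as [E1|E1].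
  - destruct (H x e (eq_sym E1)) as [d [[Hd1 Hd2] _]]. exists (head d). left. split; eauto.
  - destruct (classic (fv f x = head e)) as [E2|E2].
    + destruct (H x (drev e) (eq_sym E2)) as [d [[Hd1 Hd2] _]].
      exists (head d). right; left. repeat split; auto. exists (drev d).
      rewrite head_drev, fd_rev, Hd2, drev_invol. auto.
    + exists x. right; right. auto.
Qed.

Lemma Sig_uniq {X Y} (f : gmor X Y) : ULP f -> forall e x y y', Sig f e x y -> Sig f e x y' -> y = y'.
Proof.
  intros H e x y y' [[E1 [d [D1 [D2 D3]]]]|[[E1 [E2 [d [D1 [D2 D3]]]]]|[E1 [E2 E3]]]]
    [[F1 [d' [G1 [G2 G3]]]]|[[F1 [F2 [d' [G1 [G2 G3]]]]]|[F1 [F2 F3]]]]; try contradiction; try congruence.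
  - assert (d = d') by (apply (ulp_eq f H); congruence). congruence.
  - assert (drev d = drev d') by (apply (ulp_eq f H); [unfold head in *; congruence| rewrite !fd_rev; congruence]).
    rewrite <- D3, <- G3. rewrite <- (drev_invol _ d), <- (drev_invol _ d'), H0. reflexivity.
Qed.

Definition sigma {X Y} (f : gmor X Y) (e : D Y) (x : V X) : V X :=
  epsilon (inhabits x) (Sig f e x).

Definition act {X Y} (f : gmor X Y) (l : list (D Y)) (x : V X) : V X :=
  fold_left (fun x e => sigma f e x) l x.

Lemma sigma_eq {X Y} (f : gmor X Y) : ULP f -> forall e x y, Sig f e x y -> sigma f e x = y.
Proof.
  intros H e x y S. apply (Sig_uniq f H e x); auto. unfold sigma. apply epsilon_spec. eauto.
Qed.

Lemma sigma_rev {X Y} (f : gmor X Y) : ULP f -> forall e x, sigma f (drev e) (sigma f e x) = x.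
Proof.
  intros H e x. assert (S : Sig f e x (sigma f e x)) by (unfold sigma; apply epsilon_spec; apply Sig_ex; auto).
  apply sigma_eq; auto. set (y := sigma f e x) in *. clearbody y.
  destruct S as [[E1 [d [D1 [D2 D3]]]]|[[E1 [E2 [d [D1 [D2 D3]]]]]|[E1 [E2 E3]]]].
  - left. split.
    + rewrite <- D3, <- head_fd, D2. reflexivity.
    + exists (drev d). rewrite fd_rev, D2, head_drev. unfold head in D3. auto.
  - right; left. rewrite <- D3, <- fd_tail, D2. split; [|split].
    + intro C. apply E1. rewrite E2. unfold head. symmetry; exact C.
    + rewrite head_drev. reflexivity.
    + exists (drev d). rewrite head_drev, fd_rev, D2. unfold head in D1. auto.
  - right; right. subst y. rewrite head_drev. split; [|split]; auto.
Qed.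

Lemma act_app {X Y} (f : gmor X Y) l1 l2 x : act f (l1 ++ l2) x = act f l2 (act f l1 x).
Proof. unfold act. apply fold_left_app. Qed.

Lemma act_hom {X Y} (f : gmor X Y) : ULP f -> forall l l', homotopic l l' -> forall x, act f l x = act f l' x.
Proof.
  intros H l l' Hh. induction Hh; intro x0; auto.
  - destruct H0. rewrite !act_app. simpl. f_equal. unfold act. simpl. apply sigma_rev; auto.
  - rewrite IHHh1; auto.
Qed.

Lemma act_walk {X Y} (f : gmor X Y) : ULP f -> forall Wt x, is_walk x Wt -> act f (map (fd f) Wt) x = wend x Wt.
Proof.
  intros H Wt; induction Wt as [|d l IH]; intros x Hw; simpl; auto.
  destruct Hw as [Ht Hw]. unfold act in *. simpl.
  rewrite (sigma_eq f H (fd f d) x (head d)). apply IH; auto.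
  left. split. rewrite fd_tail; congruence. eauto.
Qed.

Lemma act_cancel {X Y} (f : gmor X Y) : ULP f -> forall l x, act f (rev_walk l) (act f l x) = x.
Proof. intros H l x. rewrite <- act_app. rewrite (act_hom f H _ _ (hom_cancel l)). reflexivity. Qed.

Lemma act_cancel' {X Y} (f : gmor X Y) : ULP f -> forall l x, act f l (act f (rev_walk l) x) = x.
Proof. intros H l x. rewrite <- act_app. rewrite (act_hom f H _ _ (hom_cancel' l)). reflexivity. Qed.

Definition LC {X Y} (f : gmor X Y) (x : V X) (W : list (D Y)) : Prop :=
  exists Wt, closed_walk x Wt /\ map (fd f) Wt = W.

Lemma lc_act {X Y} (f : gmor X Y) : ULP f -> forall x W, is_walk (fv f x) W -> (LC f x W <-> act f W x = x).
Proof.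
  intros H x W Hw. split.
  - intros [Wt [[H1 H2] H3]]. subst W. rewrite act_walk; auto.
  - intro E. destruct (lift_ex f H W x Hw) as [Wt [H1 H2]]. exists Wt. subst W.
    rewrite act_walk in E; auto. split; [split|]; auto.
Qed.

Lemma ip_hom {G : graph} s (x : V G) a b : homotopic a b -> in_pi1s s x b -> in_pi1s s x a.
Proof. intros H [l [H1 H2]]. exists l. split; auto. eapply hom_trans; eauto. Qed.

Lemma ip_gen {G : graph} s (x : V G) l : in_gen (pi1_gen s x) l -> in_pi1s s x l.
Proof. intro H. exists l. split; auto. apply hom_refl. Qed.

Lemma ip_app {G : graph} s (x : V G) a b : in_pi1s s x a -> in_pi1s s x b -> in_pi1s s x (a ++ b).
Proof.
  intros [a' [Ha Ha']] [b' [Hb Hb']]. exists (a' ++ b'). split. apply gen_app; auto.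
  apply hom_app; auto.
Qed.

Lemma ip_rev {G : graph} s (x : V G) a : in_pi1s s x a -> in_pi1s s x (rev_walk a).
Proof.
  intros [a' [Ha Ha']]. exists (rev_walk a'). split. apply gen_inv; auto. apply hom_rev; auto.
Qed.

Lemma ip_nil {G : graph} s (x : V G) : in_pi1s s x [].
Proof. apply ip_gen. constructor. Qed.

Lemma ip_conj {G : graph} s (a : V G) U l :
  is_walk a U -> in_pi1s s (wend a U) l -> in_pi1s s a (U ++ l ++ rev_walk U).
Proof.
  intros HU [l' [Hg Hh]]. apply ip_hom with (U ++ l' ++ rev_walk U). apply hom_ctx; auto.
  clear Hh l. induction Hg as [|l Hp|l1 l2 H1 IH1 H2 IH2|l H IH].
  - simpl. apply ip_hom with []. apply hom_cancel. apply ip_nil.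
  - apply ip_gen. apply gen_base. destruct Hp as [W0 [Q [HW0 [HQ [Hlen Heq]]]]].
    exists (U ++ W0), Q. rewrite is_walk_app, wend_app. split; [auto|split; [auto|split; [auto|]]].
    subst l. rewrite rev_walk_app. rewrite <- !app_assoc. reflexivity.
  - apply ip_hom with ((U ++ l1 ++ rev_walk U) ++ (U ++ l2 ++ rev_walk U)).
    + replace ((U ++ l1 ++ rev_walk U) ++ U ++ l2 ++ rev_walk U) with
        ((U ++ l1) ++ (rev_walk U ++ U) ++ (l2 ++ rev_walk U)) by (rewrite <- !app_assoc; reflexivity).
      replace (U ++ (l1 ++ l2) ++ rev_walk U) with ((U ++ l1) ++ [] ++ (l2 ++ rev_walk U))
        by (simpl; rewrite <- !app_assoc; reflexivity).
      apply hom_sym, hom_ctx, hom_cancel'.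
    + apply ip_app; auto.
  - replace (U ++ rev_walk l ++ rev_walk U) with (rev_walk (U ++ l ++ rev_walk U)).
    apply ip_rev; auto.
    rewrite !rev_walk_app, rev_walk_invol, app_assoc. reflexivity.
Qed.

Lemma not_nodup_map {A B : Type} (f : A -> B) (l : list A) :
  ~ NoDup (map f l) -> exists l1 a l2 b l3, l = l1 ++ a :: l2 ++ b :: l3 /\ f a = f b.
Proof.
  induction l as [|x l IH]; intro H. exfalso; apply H; constructor.
  destruct (classic (In (f x) (map f l))) as [Hin|Hin].
  - apply in_map_iff in Hin. destruct Hin as [b [Hb Hbin]].
    destruct (in_split _ _ Hbin) as [l2 [l3 E]]. exists [], x, l2, b, l3. subst; simpl; auto.
  - assert (~ NoDup (map f l)) by (intro C; apply H; simpl; constructor; auto).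
    destruct (IH H0) as [l1 [a [l2 [b [l3 [E F]]]]]]. exists (x :: l1), a, l2, b, l3.
    subst; simpl; auto.
Qed.

Lemma nodup_neq {A B : Type} (f : A -> B) l1 a l2 b l3 :
  NoDup (map f (l1 ++ a :: l2 ++ b :: l3)) -> f a <> f b.
Proof.
  intros H E. rewrite map_app in H. simpl in H. apply NoDup_remove_2 in H. apply H.
  apply in_or_app; right. rewrite map_app. apply in_or_app; right. simpl. left. auto.
Qed.

Lemma walk_split {G : graph} (x : V G) l1 d l2 :
  is_walk x (l1 ++ d :: l2) -> is_walk x l1 /\ tail d = wend x l1 /\ is_walk (head d) l2.
Proof. rewrite is_walk_app. simpl. tauto. Qed.

Lemma wend_split {G : graph} (x : V G) l1 d l2 :
  wend x (l1 ++ d :: l2) = wend (head d) l2.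
Proof. rewrite wend_app. reflexivity. Qed.

Lemma nodup_closed {G : graph} (z : V G) Q :
  closed_walk z Q -> NoDup (map tail Q) -> Q = [] \/ cycle_walk z Q \/ exists d, Q = [d; drev d].
Proof.
  intros [Hw Hc] Hn. destruct Q as [|d0 Q0]. left; auto. right.
  destruct (classic (forall l1 d l2 d' l3, d0 :: Q0 = l1 ++ d :: l2 ++ d' :: l3 -> d' <> d /\ d' <> drev d)) as [Hall|Hall].
  - left. split; [discriminate|split; [split; auto|split; auto]].
  - right. apply not_all_ex_not in Hall as [l1 Hall]. apply not_all_ex_not in Hall as [d Hall].
    apply not_all_ex_not in Hall as [l2 Hall]. apply not_all_ex_not in Hall as [d' Hall].
    apply not_all_ex_not in Hall as [l3 Hall].
    apply imply_to_and in Hall as [E Hall].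
    set (Q := d0 :: Q0) in *. clearbody Q. subst Q.
    pose proof (nodup_neq _ _ _ _ _ _ Hn) as Ntl.
    assert (K : d' = d \/ d' = drev d) by (apply NNPP; intro C; apply Hall; split; intro; apply C; auto).
    destruct K as [K|K]; [subst d'; contradiction|]. subst d'.
    destruct (walk_split _ _ _ _ Hw) as [W1 [W2 W3]].
    destruct l2 as [|e l2].
    + simpl in *. destruct W3 as [_ W3].
      destruct l3 as [|e l3].
      * destruct l1 as [|e l1].
        -- exists d. reflexivity.
        -- exfalso. rewrite wend_split in Hc. simpl in Hc. rewrite head_drev in Hc.
           simpl in Hw. destruct Hw as [Hw _].
           apply (nodup_neq tail [] e l1 d [drev d]); simpl; auto; congruence.
      * exfalso. simpl in W3. destruct W3 as [W3 _]. rewrite head_drev in W3.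
        apply (nodup_neq tail l1 d [drev d] e l3); simpl; auto; congruence.
    + exfalso. simpl in W3. destruct W3 as [W3 _].
      apply (nodup_neq tail (l1 ++ [d]) e l2 (drev d) l3).
      * rewrite <- app_assoc. exact Hn.
      * rewrite W3. reflexivity.
Qed.

Lemma closed_ip {G : graph} s : forall n (Q : list (D G)) z,
  length Q <= n -> closed_walk z Q -> length Q <= s -> in_pi1s s z Q.
Proof.
  induction n as [|n IH]; intros Q z Hn Hc Hs.
  - destruct Q; simpl in Hn; [apply ip_nil| lia].
  - destruct (classic (NoDup (map tail Q))) as [Hnd|Hnd].
    + destruct (nodup_closed z Q Hc Hnd) as [E|[E|[d E]]].
      * subst; apply ip_nil.
      * apply ip_gen, gen_base. exists [], Q. simpl. rewrite app_nil_r. split; [exact I|split; [exact E|split; auto]].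
      * subst Q. apply ip_hom with []. apply rst_step. apply (red1_intro [] [] d). apply ip_nil.
    + destruct (not_nodup_map tail Q Hnd) as [A [d [B [d' [C [E F]]]]]]. subst Q.
      destruct Hc as [Hw Hc].
      destruct (walk_split _ _ _ _ Hw) as [W1 [W2 W3]].
      rewrite is_walk_app in W3. destruct W3 as [W3 W4]. simpl in W4. destruct W4 as [W4 W5].
      rewrite wend_split, wend_app in Hc. simpl in Hc.
      rewrite !length_app in Hn, Hs. simpl in Hn, Hs. rewrite length_app in Hn, Hs. simpl in Hn, Hs.
      assert (I1 : in_pi1s s (wend z A) (d :: B)).
      { apply (IH (d :: B)). simpl; lia. split. simpl. split; auto. simpl. congruence. simpl; lia. }
      assert (I2 : in_pi1s s z (A ++ d' :: C)).
      { apply IH. rewrite length_app; simpl; lia.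
        split. rewrite is_walk_app. simpl. split; auto. split; auto. congruence.
        rewrite wend_split. auto. rewrite length_app; simpl; lia. }
      apply ip_hom with ((A ++ (d :: B) ++ rev_walk A) ++ (A ++ d' :: C)).
      * replace ((A ++ (d :: B) ++ rev_walk A) ++ A ++ d' :: C) with
          ((A ++ d :: B) ++ (rev_walk A ++ A) ++ (d' :: C)) by (rewrite <- !app_assoc; reflexivity).
        replace (A ++ d :: B ++ d' :: C) with ((A ++ d :: B) ++ [] ++ (d' :: C))
          by (simpl; rewrite <- !app_assoc; reflexivity).
        apply hom_sym, hom_ctx, hom_cancel'.
      * apply ip_app; auto. apply ip_conj; auto.
Qed.

Lemma closed_ip' {G : graph} s (Q : list (D G)) z :
  closed_walk z Q -> length Q <= s -> in_pi1s s z Q.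
Proof. intros; eapply closed_ip; eauto. Qed.

Lemma gen_closed {G : graph} s (x : V G) l : pi1_gen s x l -> closed_walk x l.
Proof.
  intros [W0 [Q [HW0 [[_ [[HQ1 HQ2] _]] [_ E]]]]]. subst l.
  destruct (rev_walk_walk _ _ HW0) as [R1 R2].
  split.
  - rewrite !is_walk_app, HQ2. auto.
  - rewrite !wend_app, HQ2. auto.
Qed.

Lemma ip_map {X Y} (f : gmor X Y) s x W : in_pi1s s x W -> in_pi1s s (fv f x) (map (fd f) W).
Proof.
  intros [l [Hg Hh]]. apply ip_hom with (map (fd f) l). apply hom_map; auto. clear Hh W.
  induction Hg as [|l Hp|l1 l2 H1 IH1 H2 IH2|l H IH].
  - apply ip_nil.
  - destruct Hp as [W0 [Q [HW0 [HQ [Hlen Heq]]]]]. subst l.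
    rewrite !map_app, map_rev_walk. apply ip_conj. apply map_walk; auto.
    apply closed_ip'. 2: rewrite length_map; auto.
    destruct HQ as [_ [[HQ1 HQ2] _]]. rewrite <- fv_wend. split. apply map_walk; auto.
    rewrite <- fv_wend, HQ2. reflexivity.
  - rewrite map_app. apply ip_app; auto.
  - rewrite map_rev_walk. apply ip_rev; auto.
Qed.

Lemma cov_ulp {X Y} (f : gmor X Y) : is_covering f -> ULP f.
Proof. intros [_ [_ H]]. exact H. Qed.

Lemma char_move {X Y} s (f : gmor X Y) x0 x1 :
  is_covering f -> char_subgroup_is_pi1s s f x0 -> char_subgroup_is_pi1s s f x1.
Proof.
  intros Hc Ch W HW. pose proof (cov_ulp f Hc) as U.
  destruct Hc as [[_ Con] _]. destruct (Con x0 x1) as [P [HP1 HP2]].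
  set (Um := map (fd f) P).
  assert (HU1 : is_walk (fv f x0) Um) by (apply map_walk; auto).
  assert (HU2 : wend (fv f x0) Um = fv f x1) by (unfold Um; rewrite <- fv_wend, HP2; auto).
  assert (A1 : act f Um x0 = x1) by (unfold Um; rewrite act_walk; auto).
  assert (A2 : act f (rev_walk Um) x1 = x0).
  { unfold Um. rewrite <- map_rev_walk. destruct (rev_walk_walk _ _ HP1) as [R1 R2].
    rewrite HP2 in R1, R2. rewrite act_walk; auto. }
  destruct HW as [HW1 HW2].
  assert (CW : closed_walk (fv f x0) (Um ++ W ++ rev_walk Um)).
  { destruct (rev_walk_walk _ _ HU1) as [R1 R2]. rewrite HU2 in R1, R2. split.
    - rewrite !is_walk_app, HU2, HW2. auto.
    - rewrite !wend_app, HU2, HW2. auto. }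
  specialize (Ch _ CW). fold (LC f x0 (Um ++ W ++ rev_walk Um)) in Ch. fold (LC f x1 W).
  rewrite (lc_act f U) in Ch by (apply CW). rewrite (lc_act f U) by auto.
  rewrite !act_app, A1 in Ch.
  split.
  - intro E. rewrite E, A2 in Ch. assert (I : in_pi1s s (fv f x0) (Um ++ W ++ rev_walk Um)) by (apply Ch; reflexivity).
    destruct (rev_walk_walk _ _ HU1) as [R1 R2]. rewrite HU2 in R1, R2.
    pose proof (ip_conj s _ (rev_walk Um) (Um ++ W ++ rev_walk Um) R1) as J. rewrite R2 in J. apply J in I.
    apply ip_hom with (rev_walk Um ++ (Um ++ W ++ rev_walk Um) ++ rev_walk (rev_walk Um)); auto.
    rewrite rev_walk_invol.
    replace (rev_walk Um ++ (Um ++ W ++ rev_walk Um) ++ Um) with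
      ((rev_walk Um ++ Um) ++ W ++ (rev_walk Um ++ Um)) by (rewrite <- !app_assoc; reflexivity).
    apply hom_sym. eapply hom_trans. apply hom_app. apply hom_cancel'. apply hom_app. apply hom_refl.
    apply hom_cancel'. simpl; rewrite app_nil_r; apply hom_refl.
  - intro I. rewrite <- HU2 in I. apply (ip_conj s _ Um W HU1) in I.
    apply Ch in I. rewrite <- (act_cancel' f U Um (act f W x1)). rewrite I. auto.
Qed.

Lemma gen_lift {X Y} (f : gmor X Y) s y (g : list (D X)) :
  ULP f -> closed_walk y g -> pi1_gen s (fv f y) (map (fd f) g) -> pi1_gen s y g.
Proof.
  intros U [Hw Hc] [W0 [Q [HW0 [HQ [Hlen Heq]]]]].
  apply map_eq_app in Heq as [A [g' [E1 [M1 M2]]]].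
  apply map_eq_app in M2 as [B [C [E2 [M3 M4]]]]. subst g g'.
  rewrite !is_walk_app in Hw. destruct Hw as [WA [WB WC]].
  rewrite !wend_app in Hc.
  destruct (rev_walk_walk _ _ WC) as [R1 R2]. rewrite Hc in R1, R2.
  assert (EC : rev_walk C = A).
  { apply (lift_uniq f U _ _ y); auto. rewrite map_rev_walk, M4, rev_walk_invol. auto. }
  rewrite EC in R2.
  exists A, B. split; auto. split; [|split].
  - destruct HQ as [Q1 [_ [Q3 Q4]]]. split; [|split; [|split]].
    + intro N. subst B. apply Q1. rewrite <- M3. reflexivity.
    + split; auto.
    + apply (NoDup_map_inv (fv f)). rewrite map_map.
      erewrite map_ext. 2: intro; symmetry; apply fd_tail. rewrite <- map_map, M3. auto.
    + intros l1 d l2 d' l3 E. subst B. rewrite <- M3 in Q4. rewrite map_app in Q4. simpl in Q4. rewrite map_app in Q4. simpl in Q4.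
      destruct (Q4 _ _ _ _ _ eq_refl) as [N1 N2]. split; intro N; subst d'.
      apply N1; auto. apply N2; apply fd_rev.
  - rewrite <- M3, length_map in Hlen. auto.
  - rewrite <- EC, rev_walk_invol. reflexivity.
Qed.

Lemma build {X1 X2 Y} (f1 : gmor X1 Y) (f2 : gmor X2 Y) x1 x2 :
  connected X1 -> ULP f1 -> ULP f2 -> fv f1 x1 = fv f2 x2 ->
  (forall W, closed_walk (fv f1 x1) W -> act f1 W x1 = x1 -> act f2 W x2 = x2) ->
  exists h : gmor X1 X2, (forall v, fv f2 (fv h v) = fv f1 v) /\
    (forall d, fd f2 (fd h d) = fd f1 d) /\
    (forall Wt Ut, is_walk x1 Wt -> is_walk x2 Ut -> map (fd f2) Ut = map (fd f1) Wt ->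
        fv h (wend x1 Wt) = wend x2 Ut).
Proof.
  intros [_ Con] U1 U2 E12 Hyp.
  set (pw := fun v => proj1_sig (constructive_indefinite_description _ (Con x1 v))).
  assert (Hpw : forall v, is_walk x1 (pw v) /\ wend x1 (pw v) = v).
  { intro v. unfold pw. destruct (constructive_indefinite_description _ _). auto. }
  set (hv := fun v => act f2 (map (fd f1) (pw v)) x2).
  assert (Hwalk : forall Wt, is_walk x1 Wt -> hv (wend x1 Wt) = act f2 (map (fd f1) Wt) x2).
  { intros Wt HWt. unfold hv. destruct (Hpw (wend x1 Wt)) as [P1 P2].
    set (Wt' := pw (wend x1 Wt)) in *. clearbody Wt'.
    destruct (rev_walk_walk _ _ P1) as [R1 R2]. rewrite P2 in R1, R2.
    assert (CW : closed_walk x1 (Wt ++ rev_walk Wt')).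
    { split. rewrite is_walk_app. auto. rewrite wend_app. auto. }
    assert (A1 : act f1 (map (fd f1) (Wt ++ rev_walk Wt')) x1 = x1).
    { destruct CW as [C1 C2]. rewrite act_walk; auto. }
    apply Hyp in A1.
    2:{ destruct CW as [C1 C2]. split. apply map_walk; auto. rewrite <- fv_wend, C2. auto. }
    rewrite map_app, act_app, map_rev_walk in A1.
    rewrite <- A1 at 1. rewrite act_cancel'; auto. }
  assert (Hrel : forall Wt Ut, is_walk x1 Wt -> is_walk x2 Ut -> map (fd f2) Ut = map (fd f1) Wt ->
        hv (wend x1 Wt) = wend x2 Ut).
  { intros Wt Ut H1 H2 H3. rewrite Hwalk by auto. rewrite <- H3, act_walk; auto. }
  assert (Hlift : forall Wt, is_walk x1 Wt -> exists Ut, is_walk x2 Ut /\ map (fd f2) Ut = map (fd f1) Wt).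
  { intros Wt H. apply lift_ex; auto. rewrite <- E12. apply map_walk; auto. }
  assert (Hproj : forall v, fv f2 (hv v) = fv f1 v).
  { intro v. destruct (Hpw v) as [P1 P2]. destruct (Hlift _ P1) as [Ut [H1 H2]].
    rewrite <- P2, (Hrel _ Ut); auto. rewrite !fv_wend, H2, E12. auto. }
  assert (Hdex : forall d, exists d2, tail d2 = hv (tail d) /\ fd f2 d2 = fd f1 d).
  { intro d. destruct (U2 (hv (tail d)) (fd f1 d)) as [d2 [H _]]. rewrite fd_tail, Hproj; auto. eauto. }
  set (hd := fun d => proj1_sig (constructive_indefinite_description _ (Hdex d))).
  assert (Hhd : forall d, tail (hd d) = hv (tail d) /\ fd f2 (hd d) = fd f1 d).
  { intro d. unfold hd. destruct (constructive_indefinite_description _ _). auto. }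
  assert (Hhead : forall d, head (hd d) = hv (head d)).
  { intro d. destruct (Hpw (tail d)) as [P1 P2]. destruct (Hlift _ P1) as [Ut [H1 H2]].
    assert (T : tail (hd d) = wend x2 Ut) by (rewrite (proj1 (Hhd d)), <- P2; apply Hrel; auto).
    pose proof (Hrel (pw (tail d) ++ [d]) (Ut ++ [hd d])) as K.
    rewrite !wend_app in K. simpl in K. symmetry. apply K.
    - rewrite is_walk_app. simpl. rewrite P2. auto.
    - rewrite is_walk_app. simpl. auto.
    - rewrite !map_app, H2. simpl. rewrite (proj2 (Hhd d)). auto. }
  assert (Hrev : forall d, hd (drev d) = drev (hd d)).
  { intro d. apply (ulp_eq f2 U2).
    - rewrite (proj1 (Hhd _)). change (tail (drev (hd d))) with (head (hd d)). rewrite Hhead. reflexivity.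
    - rewrite (proj2 (Hhd _)), !fd_rev, (proj2 (Hhd _)). auto. }
  exists (GMor X1 X2 hv hd (fun d => proj1 (Hhd d)) Hrev). simpl.
  split; auto. split; auto. intro d. apply Hhd.
Qed.

Lemma equiv_from {X1 X2 Y} (f1 : gmor X1 Y) (f2 : gmor X2 Y) x1 x2 :
  is_covering f1 -> is_covering f2 -> fv f1 x1 = fv f2 x2 ->
  (forall W, closed_walk (fv f1 x1) W -> (act f1 W x1 = x1 <-> act f2 W x2 = x2)) ->
  equiv_cov f1 f2.
Proof.
  intros C1 C2 E K. pose proof (cov_ulp _ C1) as U1. pose proof (cov_ulp _ C2) as U2.
  destruct (build f1 f2 x1 x2 (proj1 C1) U1 U2 E) as [h [Hv [Hd Hr]]].
  { intros W HW. apply K; auto. }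
  destruct (build f2 f1 x2 x1 (proj1 C2) U2 U1 (eq_sym E)) as [h' [Hv' [Hd' Hr']]].
  { intros W HW. rewrite <- E in HW. apply K; auto. }
  exists h. split; [|split; auto].
  exists h'. split; [|split; [|split]].
  - intro v. destruct (proj2 (proj1 C1) x1 v) as [Wt [H1 H2]].
    destruct (lift_ex f2 U2 (map (fd f1) Wt) x2) as [Ut [G1 G2]].
    { rewrite <- E. apply map_walk; auto. }
    subst v. rewrite (Hr Wt Ut) by auto; apply Hr'; auto.
  - intro v. destruct (proj2 (proj1 C2) x2 v) as [Wt [H1 H2]].
    destruct (lift_ex f1 U1 (map (fd f2) Wt) x1) as [Ut [G1 G2]].
    { rewrite E. apply map_walk; auto. }
    subst v. rewrite (Hr' Wt Ut) by auto; apply Hr; auto.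
  - intro d. apply (ulp_eq f1 U1).
    + rewrite !fd_tail.
      destruct (proj2 (proj1 C1) x1 (tail d)) as [Wt [H1 H2]].
      destruct (lift_ex f2 U2 (map (fd f1) Wt) x2) as [Ut [G1 G2]].
      { rewrite <- E. apply map_walk; auto. }
      rewrite <- H2. rewrite (Hr Wt Ut) by auto; apply Hr'; auto.
    + rewrite Hd', Hd. auto.
  - intro d. apply (ulp_eq f2 U2).
    + rewrite !fd_tail.
      destruct (proj2 (proj1 C2) x2 (tail d)) as [Wt [H1 H2]].
      destruct (lift_ex f1 U1 (map (fd f2) Wt) x1) as [Ut [G1 G2]].
      { rewrite E. apply map_walk; auto. }
      rewrite <- H2. rewrite (Hr' Wt Ut) by auto; apply Hr; auto.
    + rewrite Hd, Hd'. auto.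
Qed.

Theorem lemma4p5 (G Gr Grr Grr_r : graph) (r r' : nat) (hrr : r <= r')
    (pr : gmor Gr G) (prr : gmor Grr G) (q : gmor Gr Grr)
    (p_rr' : gmor Grr_r Grr) :
  connected G ->
  is_local_covering r pr ->
  is_local_covering r' prr ->
  is_covering q ->
  (forall v, fv pr v = fv prr (fv q v)) ->
  (forall d, fd pr d = fd prr (fd q d)) ->
  is_local_covering r p_rr' ->
  equiv_cov p_rr' q /\ equiv_cov pr (gcomp prr p_rr') /\ graph_iso Grr_r Gr.
Proof.
  intros HG Hpr Hprr Hq Hv Hd Hp.
  destruct Hpr as [Cpr [xr0 Chr]]. destruct Hprr as [Cprr [xrr0 Chrr]].
  destruct Hp as [Cp [z Chp]].
  pose proof Hq as [Cq [Sq _]].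
  set (y := fv p_rr' z) in *.
  destruct (Sq y) as [x2 Hx2].
  pose proof (char_move r pr xr0 x2 Cpr Chr) as Chr2.
  pose proof (char_move r' prr xrr0 y Cprr Chrr) as Chrr2.
  pose proof (cov_ulp _ Cpr) as Upr. pose proof (cov_ulp _ Cprr) as Uprr.
  pose proof (cov_ulp _ Cp) as Up. pose proof (cov_ulp _ Hq) as Uqq.
  set (c := gcomp prr p_rr').
  assert (Uc : ULP c).
  { intros x e He. simpl in He.
    destruct (Uprr (fv p_rr' x) e He) as [e1 [[E1 E2] _]].
    destruct (Up x e1 E1) as [d [[D1 D2] _]].
    exists d. split. split; auto. simpl. congruence.
    intros d' [F1 F2]. simpl in F2. apply (ulp_eq _ Up). congruence.
    apply (ulp_eq _ Uprr). rewrite !fd_tail. congruence. congruence. }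
  assert (K : forall W, closed_walk (fv p_rr' z) W -> (act p_rr' W z = z <-> act q W x2 = x2)).
  { intros W [HW1 HW2]. fold y in HW1, HW2.
    rewrite <- (lc_act p_rr' Up z W HW1).
    rewrite <- (lc_act q Uqq x2 W) by (rewrite Hx2; auto).
    assert (LQ : LC q x2 W <-> LC pr x2 (map (fd prr) W)).
    { split.
      - intros [Z [CZ MZ]]. exists Z. split; auto. rewrite <- MZ, map_map. apply map_ext. intro; apply Hd.
      - intros [Z [CZ MZ]]. exists Z. split; auto. apply (lift_uniq prr Uprr _ _ y).
        + rewrite <- Hx2. apply map_walk, CZ.
        + exact HW1.
        + rewrite map_map, <- MZ. apply map_ext. intro; symmetry; apply Hd. }
    assert (CM : closed_walk (fv pr x2) (map (fd prr) W)).
    { rewrite Hv, Hx2. split. apply map_walk; auto. rewrite <- fv_wend, HW2. auto. }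
    pose proof (Chp W (conj HW1 HW2)) as Ip. fold (LC p_rr' z W) in Ip.
    pose proof (Chr2 _ CM) as Ir. fold (LC pr x2 (map (fd prr) W)) in Ir.
    rewrite Ip, LQ, Ir, Hv, Hx2.
    split. apply ip_map.
    intro I. apply Ip.
    assert (AC : act c (map (fd prr) W) z = z).
    { destruct I as [l [Hl Hh]]. rewrite (act_hom c Uc _ _ Hh). clear Hh.
      induction Hl as [|l Hp0|l1 l2 H1 IH1 H2 IH2|l H IH].
      - reflexivity.
      - pose proof (gen_closed _ _ _ Hp0) as Cl.
        apply (lc_act c Uc z l). apply Cl.
        assert (Ir' : in_pi1s r' (fv prr y) l).
        { apply ip_gen, gen_base. destruct Hp0 as [W0 [Q [A1 [A2 [A3 A4]]]]].
          exists W0, Q. split; auto. split; auto. split; auto. lia. }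
        apply (Chrr2 l Cl) in Ir'. destruct Ir' as [gt [Cgt Mgt]].
        assert (Pg : pi1_gen r y gt) by (apply (gen_lift prr r y gt Uprr Cgt); rewrite Mgt; auto).
        destruct (proj2 (Chp gt Cgt) (ip_gen _ _ _ (gen_base _ _ Pg))) as [Z [CZ MZ]].
        exists Z. split; auto. rewrite <- Mgt, <- MZ, map_map. reflexivity.
      - rewrite act_app, IH1, IH2. reflexivity.
      - pose proof (act_cancel c Uc l z) as KK. rewrite IH in KK. exact KK. }
    apply (lc_act c Uc z) in AC.
    2:{ simpl. apply map_walk; auto. }
    destruct AC as [Z [CZ MZ]]. exists Z. split; auto.
    apply (lift_uniq prr Uprr _ _ y).
    + apply map_walk, CZ.
    + exact HW1.
    + rewrite map_map, <- MZ. reflexivity. }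
  destruct (equiv_from p_rr' q z x2 Cp Hq (eq_sym Hx2) K) as [h [[hi [H1 [H2 [H3 H4]]]] [Hv' Hd']]].
  split; [|split].
  - exists h. split; auto. exists hi. auto.
  - exists hi. split.
    + exists h. auto.
    + split.
      * intro v. simpl. rewrite <- Hv', H2, Hv. reflexivity.
      * intro d. simpl. rewrite <- Hd', H4, Hd. reflexivity.
  - exists h. exists hi. auto.
Qed.
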